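(* Let $k=\mathbb{R}$ or $k=\mathbb{C}$, let $\mathcal Z\subset k$ be a discrete subring closed under conjugation, $(a_n)_{n\ge1}$ a sequence in $\mathcal Z$ and $x_0\in k$ with $x_n=T_{a_n}\cdots T_{a_1}x_0$ defined and $|x_n|<1$ for all $n\ge0$. Then for each $n$ there exist $p_n,q_n\in\mathcal Z$ with $|q_n|\ge1$ such that $p_n/q_n=T^{-1}_{a_1}\cdots T^{-1}_{a_n}0$ and \[\left|T^{-1}_{a_1}\cdots T^{-1}_{a_n}0-x_0\right|=\frac{1}{|q_n|}\prod_{i=0}^n|x_i|.\]
   Context: For $a\in\mathcal Z$, $T_ax=x^{-1}-a$ and $T_a^{-1}x=(x+a)^{-1}$. Discrete means discrete in the Euclidean topology. *)

(* Defs.v *)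
From HB Require Import structures.
From mathcomp Require Import all_boot all_order all_algebra.
From mathcomp Require Import reals complex.
Set Implicit Arguments. Unset Strict Implicit. Unset Printing Implicit Defensive.
Import Order.TTheory GRing.Theory Num.Theory.
Local Open Scope ring_scope.

Definition is_subring (k : numFieldType) (Z : k -> Prop) : Prop :=
  [/\ Z 0, Z 1,
      (forall x y, Z x -> Z y -> Z (x + y)),
      (forall x, Z x -> Z (- x)) &
      (forall x y, Z x -> Z y -> Z (x * y))].

Definition is_discrete (k : numFieldType) (Z : k -> Prop) : Prop :=
  forall z, Z z -> exists2 e : k, 0 < e & forall w, Z w -> `|w - z| < e -> w = z.

Definition conj_closed (k : numFieldType) (conj : k -> k) (Z : k -> Prop) : Prop :=
  forall z, Z z -> Z (conj z).

Definition T (k : numFieldType) (a x : k) : k := x^-1 - a.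
Definition Tinv (k : numFieldType) (a x : k) : k := (x + a)^-1.

(* orbit x_n = T_{a_n} ... T_{a_1} x0 (a indexed from 1; a 0 unused) *)
Fixpoint orbit (k : numFieldType) (a : nat -> k) (x0 : k) (n : nat) : k :=
  match n with
  | 0 => x0
  | m.+1 => T (a m.+1) (orbit a x0 m)
  end.

(* backward composition T^{-1}_{a_m} T^{-1}_{a_{m+1}} ... T^{-1}_{a_n} 0
   (for m > n this is 0); convergent n := back a 1 n *)
Fixpoint back_aux (k : numFieldType) (a : nat -> k) (m len : nat) : k :=
  match len with
  | 0 => 0
  | l.+1 => Tinv (a m) (back_aux a m.+1 l)
  end.
Definition back (k : numFieldType) (a : nat -> k) (m n : nat) : k :=
  back_aux a m (n.+1 - m).

(* every step T^{-1}_{a_m}(y) = (y + a_m)^{-1} in the composition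
   T^{-1}_{a_1}...T^{-1}_{a_n} 0 is defined, i.e. y + a_m != 0 *)
Definition back_defined (k : numFieldType) (a : nat -> k) (n : nat) : Prop :=
  forall m, (1 <= m <= n)%N -> back a m.+1 n + a m != 0.

Definition lemma2p1_stmt (k : numFieldType) (conj : k -> k) : Prop :=
  forall (Z : k -> Prop), is_subring Z -> is_discrete Z -> conj_closed conj Z ->
  forall (a : nat -> k) (x0 : k),
    (forall n, (1 <= n)%N -> Z (a n)) ->
    (* x_n is defined for every n, i.e. x_n != 0 for every n *)
    (forall n, orbit a x0 n != 0) ->
    (forall n, `|orbit a x0 n| < 1) ->
    forall n, exists p q : k,
      [/\ Z p /\ Z q, 1 <= `|q|,
          back_defined a n,
          back a 1 n = p / q &
          `|back a 1 n - x0| = `|q|^-1 * \prod_(i < n.+1) `|orbit a x0 i| ].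

(* Main.v *)
Require Import Defs.
From HB Require Import structures.
From mathcomp Require Import all_boot all_order all_algebra.
From mathcomp Require Import reals complex.
From mathcomp Require Import ring lra.
Import Order.TTheory GRing.Theory Num.Theory.
Local Open Scope ring_scope.
Local Open Scope complex_scope.
Set Implicit Arguments. Unset Strict Implicit. Unset Printing Implicit Defensive.

Fixpoint cf (k : numFieldType) (a : nat -> k) (m l : nat) {struct l} : k * k :=
  match l with
  | 0 => (1, 0)
  | l.+1 => ((a m) * (cf a m.+1 l).1 + (cf a m.+1 l).2, (cf a m.+1 l).1)
  end.

Section Core.
Variable k : numFieldType.
Variable Z : k -> Prop.
Hypothesis HZ : is_subring Z.
Variable a : nat -> k.
Variable x0 : k.
Hypothesis Ha : forall n, (1 <= n)%N -> Z (a n).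
Hypothesis Hx : forall n, Defs.orbit a x0 n != 0.
Hypothesis Hx1 : forall n, `|Defs.orbit a x0 n| < 1.
Hypothesis gap : forall z, Z z -> `|z| < 1 -> z = 0.

Lemma cf_Z m l : (1 <= m)%N -> Z (cf a m l).1 /\ Z (cf a m l).2.
Proof.
case: HZ => Z0 Z1 ZD ZN ZM.
elim: l m => [|l IH] m hm /=; first by split.
have [h1 h2] := IH m.+1 (leqW hm).
split => //; apply: ZD => //; apply: ZM => //; exact: Ha.
Qed.

Lemma cf_nz m l : (cf a m l).1 != 0 \/ (cf a m l).2 != 0.
Proof.
elim: l m => [|l IH] m /=; first by left; exact: oner_neq0.
have [h|h] := eqVneq (cf a m.+1 l).1 0; last by right.
left; rewrite h mulr0 add0r.
by case: (IH m.+1) => //; rewrite h eqxx.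
Qed.

Lemma cf_err j l :
  `|(cf a j.+1 l).2 - (cf a j.+1 l).1 * Defs.orbit a x0 j|
  = \prod_(i < l.+1) `|Defs.orbit a x0 (j + i)|.
Proof.
elim: l j => [|l IH] j /=.
  by rewrite big_ord_recl big_ord0 addn0 mulr1 sub0r mul1r normrN.
rewrite big_ord_recl addn0.
under eq_bigr => i _ do rewrite /bump /= addnS -addSn.
rewrite -IH.
have ha : a j.+1 = (Defs.orbit a x0 j)^-1 - Defs.orbit a x0 j.+1.
  by rewrite /= /T opprB addrC subrK.
rewrite ha -normrM -normrN; congr `|_|.
set d := (cf a j.+2 l).1; set u := (cf a j.+2 l).2.
set y := Defs.orbit a x0 j; set z := Defs.orbit a x0 j.+1.
have hy : y != 0 by exact: Hx.
rewrite mulrDl mulrBl mulrBl -(mulrA _ d) (mulrC d y) mulrA mulVf // mul1r.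
rewrite opprB addrAC [d - _ - d]addrAC subrr add0r addrC mulrBr (mulrC y u).
by rewrite (mulrC z d) (mulrC y (d * z)).

Qed.

Lemma prod_lt1 j l : \prod_(i < l.+1) `|Defs.orbit a x0 (j + i)| < 1.
Proof.
elim: l j => [|l IH] j; first by rewrite big_ord_recl big_ord0 mulr1.
rewrite big_ord_recl.
under eq_bigr => i _ do rewrite /bump /= addnS -addSn.
apply: mulr_ilt1 => //.
by apply: prodr_ge0 => i _.

Qed.

Lemma den_ge1 j l : (cf a j.+1 l).1 != 0 /\ 1 <= `|(cf a j.+1 l).1|.
Proof.
have [ZD ZN] := @cf_Z j.+1 l erefl.
have hD : (cf a j.+1 l).1 != 0.
  apply/negP => /eqP hD.
  have := cf_err j l; rewrite hD mul0r subr0 => hN.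
  have := prod_lt1 j l; rewrite -hN => /(gap ZN) hN0.
  by case: (cf_nz j.+1 l); rewrite ?hD ?hN0 eqxx.
split => //.
rewrite real_leNgt ?realE ?normr_ge0 ?ler01 ?orbT //.
apply/negP => /(gap ZD); exact/eqP.
Qed.

Lemma back_eq m l : (1 <= m)%N ->
  back_aux a m l = (cf a m l).2 / (cf a m l).1.
Proof.
elim: l m => [|l IH] m hm /=; first by rewrite mul0r.
rewrite /Tinv IH ?(leqW hm) //.
case: m hm => // m _.
have [hd _] := den_ge1 m.+1 l.
set d := (cf a m.+2 l).1; set u := (cf a m.+2 l).2.
have -> : u / d + a m.+1 = (a m.+1 * d + u) / d.
  by rewrite mulrDl mulfK // addrC.
by rewrite invf_div.
Qed.

Lemma core n : exists p q : k,
      [/\ Z p /\ Z q, 1 <= `|q|,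
          back_defined a n,
          back a 1 n = p / q &
          `|back a 1 n - x0| = `|q|^-1 * \prod_(i < n.+1) `|Defs.orbit a x0 i| ].
Proof.
exists (cf a 1 n).2, (cf a 1 n).1.
have hb : back a 1 n = (cf a 1 n).2 / (cf a 1 n).1.
  by rewrite /back subSS subn0 back_eq.
have [hD hD1] := den_ge1 0 n.
have [Z1 Z2] := @cf_Z 1 n erefl.
split => //.
- move=> m /andP [hm1 hmn].
  rewrite /back subSS back_eq //.
  case: m hm1 hmn => // m _ hmn.
  have [hd _] := den_ge1 m.+1 (n - m.+1).
  have [hd' _] := den_ge1 m (n - m.+1).+1.
  move: hd'; rewrite /=.
  set d := (cf a m.+2 (n - m.+1)).1; set u := (cf a m.+2 (n - m.+1)).2 => hd'.
  have -> : u / d + a m.+1 = (a m.+1 * d + u) / d.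
    by rewrite mulrDl mulfK // addrC.
  by rewrite mulf_neq0 // invr_eq0.
- rewrite hb.
  have -> : (cf a 1 n).2 / (cf a 1 n).1 - x0
      = ((cf a 1 n).2 - (cf a 1 n).1 * Defs.orbit a x0 0) / (cf a 1 n).1.
    by rewrite /= mulrBl mulrAC mulfV // mul1r.
  rewrite normrM cf_err mulrC normrV ?unitfE //.
Qed.

End Core.

Lemma generic (k : numFieldType) (conj : k -> k)
  (Harchi : forall r e : k, 0 <= r -> r < 1 -> 0 < e -> exists n, r ^+ n < e) :
  lemma2p1_stmt conj.
Proof.
move=> Z HZ HD _ a x0 Ha Hx Hx1 n.
apply: core => //.
move=> z Zz hz.
case: (HZ) => Z0 Z1 ZD ZN ZM.
have [e he He] := HD 0 Z0.
have [m hm] := Harchi `|z| e (normr_ge0 _) hz he.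
have Zm : Z (z ^+ m) by elim: m {hm} => // m IH; rewrite exprS; apply: ZM.
have := He _ Zm; rewrite subr0 normrX => /(_ hm) /eqP.
by rewrite expf_eq0 => /andP [_ /eqP].
Qed.

Lemma archi_pow (F : archiRealFieldType) (r e : F) :
  0 <= r -> r < 1 -> 0 < e -> exists n, r ^+ n < e.
Proof.
move=> r0 r1 e0.
have [->|rn0] := eqVneq r 0; first by exists 1%N; rewrite expr1.
have rp : 0 < r by rewrite lt0r rn0.
pose h := r^-1 - 1.
have hp : 0 < h by rewrite subr_gt0 invf_gt1.
have bern : forall n : nat, 1 + n%:R * h <= (1 + h) ^+ n.
  elim=> [|n IH]; first by rewrite mul0r addr0 expr0.
  rewrite exprS -natr1.
  have N0 : 0 <= n%:R :> F by [].
  have h1 := mulr_ge0 (ltW hp) (mulr_ge0 N0 (ltW hp)).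
  have h2 : 0 <= (1 + h) * ((1 + h) ^+ n - (1 + n%:R * h)).
    by rewrite mulr_ge0 // ?subr_ge0 // addr_ge0 // ltW.
  nra.
pose n := Num.Def.archi_bound (e * h)^-1.
exists n.
have hn : (e * h)^-1 < n%:R by apply: archi_boundP; rewrite invr_ge0 mulr_ge0 // ltW.
have hb := bern n.
have rnp : 0 < r ^+ n by rewrite exprn_gt0.
have ehp : 0 < e * h by rewrite mulr_gt0.
have het : 1 < e * h * n%:R.
  rewrite -[X in X < _](mulfV (lt0r_neq0 ehp)) ltr_pM2l //.
have hs : r ^+ n * (1 + n%:R * h) <= 1.
  rewrite -[X in _ <= X](mulfV (lt0r_neq0 rnp)) ler_pM2l // -exprVn.
  have e1 : 1 + h = r^-1 by rewrite /h addrC subrK.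
  by rewrite -e1.
have N0 : 0 <= n%:R :> F by [].
have t0 : 0 <= n%:R * h by rewrite mulr_ge0 // ltW.
rewrite ltNge; apply/negP => hse.
have := ler_wpM2r (addr_ge0 ler01 t0) hse.
nra.
Qed.

Theorem lemma2p1 (R : realType) :
  lemma2p1_stmt (k := R) id /\ lemma2p1_stmt (k := R[i]) (fun z => z^*).
Proof.
split; apply: generic; first exact: archi_pow.
move=> r e r0 r1 e0.
have [r' hr] : exists r', r = r'%:C by apply/complex_realP; exact: ger0_real.
have [e' he] : exists e', e = e'%:C by apply/complex_realP; exact: ger0_real (ltW e0).
move: r0 r1 e0; rewrite hr he !lecE !ltcE /= => /andP [_ r0] /andP [_ r1] /andP [_ e0].
have [n hn] := archi_pow r0 r1 e0.
exists n; rewrite -rmorphXn ltcE /= eqxx.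
by rewrite andTb.
Qed.
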